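(* Let $e_0,e$ be two distinct symbols, and let $u_1,\dots,u_k,x_1,\dots,x_k,v$ be strings in which neither $e_0$ nor $e$ occurs. Let $$w = e_0\,u_1\,e\,u_2\,e\cdots e\,u_k\,e\;e_0\;x_1\,e\,x_2\,e\cdots e\,x_k\,e\,v.$$ Then every accepting computation $\varepsilon\,\|\,w\vdash^*\varepsilon\,\|\,\varepsilon$ of the queue automaton proceeds as $$\varepsilon\,\|\,w \vdash^* u_1eu_2e\cdots u_ke\,\|\,x_1ex_2e\cdots x_kev \vdash^* u_2e\cdots u_ke\,z_1\,\|\,x_2e\cdots x_kev \vdash^* \cdots$$ $$\cdots\vdash^* u_ke\,z_1\cdots z_{k-1}\,\|\,x_kev \vdash^* z_1\cdots z_k\,\|\,v \vdash^* \varepsilon\,\|\,\varepsilon$$ for some strings $z_1,\dots,z_k$; that is, for each $i$ the computation passes through the configuration $u_{i+1}e\cdots u_ke\,z_1\cdots z_i\,\|\,x_{i+1}e\cdots x_kev$, so that each $x_i$ is consumed by the corresponding $u_i$ with resultant $z_i$.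
   Context: Strings are over a finite alphabet; $\varepsilon$ is the empty string. The queue automaton: a configuration is written $Q\,\|\,x$ ($Q$ = queue contents, $x$ = remaining input). A single step $C\vdash C'$ is one of: from $Q\,\|\,\sigma x$ (with $\sigma$ a symbol) go to $Q\sigma\,\|\,x$ ($\sigma$ pushed onto the right end of the queue), or, if $Q=\sigma Q'$, go to $Q'\,\|\,x$ (input $\sigma$ matched against the leftmost queue symbol, which is popped). $C\vdash^*C'$ means reachable in zero or more steps; a computation is such a sequence of steps. A configuration $C$ is accepted if $C\vdash^*\varepsilon\,\|\,\varepsilon$, and an accepting computation of $w$ is a computation $\varepsilon\,\|\,w\vdash^*\varepsilon\,\|\,\varepsilon$. When a computation passes through configurations $u_1u_2u_3\,\|\,x_1x_2x_3 \vdash^* u_2u_3z_1\,\|\,x_2x_3 \vdash^* u_3z_1z_2\,\|\,x_3$ we say $x_2$ is consumed by $u_2$ with resultant $z_2$. *)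

(* Defs.v *)
From mathcomp Require Import all_boot.
Set Implicit Arguments. Unset Strict Implicit. Unset Printing Implicit Defensive.

(* A configuration  Q || x  is the pair (Q, x): queue contents, remaining input. *)
Definition config (T : eqType) := (seq T * seq T)%type.

Definition qstep (T : eqType) (c c' : config T) : bool :=
  match c.2 with
  | [::] => false
  | s :: x =>
      ((c' == (rcons c.1 s, x)) || ((c.1 == s :: c'.1) && (c'.2 == x)))
  end.

(* An accepting computation of w: a sequence of configurations
   (eps || w) = C_0 |- C_1 |- ... |- C_n = (eps || eps); here cs = [C_1;...;C_n]. *)
Definition accepting_computation (T : eqType) (w : seq T) (cs : seq (config T)) : bool :=
  path (@qstep T) ([::], w) cs && (last ([::], w) cs == ([::], [::])).

Definition comp_configs (T : eqType) (w : seq T) (cs : seq (config T)) : seq (config T) :=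
  ([::], w) :: cs.

Definition sep_cat (T : eqType) (e : T) (ss : seq (seq T)) : seq T :=
  flatten [seq s ++ [:: e] | s <- ss].

Definition the_word (T : eqType) (e0 e : T) (u x : seq (seq T)) (v : seq T) : seq T :=
  e0 :: sep_cat e u ++ e0 :: sep_cat e x ++ v.

Definition stage_config (T : eqType) (e : T) (u x z : seq (seq T)) (v : seq T) (i : nat)
  : config T :=
  (sep_cat e (drop i u) ++ flatten (take i z), sep_cat e (drop i x) ++ v).

(* Main.v *)
Require Import Defs.
From mathcomp Require Import all_boot.
From mathcomp Require Import zify.
Set Implicit Arguments. Unset Strict Implicit.

Section Q.
Variable T : eqType.

Definition run (c : config T) cs :=
  path (@qstep T) c cs && (last c cs == ([::], [::])).

Lemma run_count a c cs : run c cs -> count (pred1 a) c.1 <= count (pred1 a) c.2.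
Proof.
elim: cs c => [|c' cs IH] [Q y] /=; rewrite /run /=.
  by move/eqP => [-> ->].
case/andP => /andP [hs hp] hl.
have := IH c'; rewrite /run hp hl => /(_ isT).
move: hs; rewrite /qstep /=; case: y => [|s y] //=.
case/orP => [/eqP -> /=|/andP [/eqP -> /eqP ->]] /=.
  rewrite -cats1 count_cat /=; lia.
lia.
Qed.

Lemma run_step c cs s y : run c cs -> c.2 = s :: y ->
  exists c' cs', cs = c' :: cs' /\ qstep c c' /\ run c' cs'.
Proof.
case: cs => [|c' cs] /=; rewrite /run /=.
  by move=> /eqP -> .
case/andP => /andP [h1 h2] h3 _; exists c', cs; split => //; split => //.
by rewrite /run h2 h3.
Qed.

Lemma pre_lemma (e0 : T) y s p cs :
  e0 \notin s -> count (pred1 e0) y = 0 -> run (e0 :: p, s ++ e0 :: y) cs ->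
  exists n cs', drop n ((e0 :: p, s ++ e0 :: y) :: cs) = (p ++ s, y) :: cs'
     /\ run (p ++ s, y) cs'.
Proof.
elim: s p cs => [|t s IH] p cs /=.
  move=> _ hy hr; have [c' [cs' [-> [hq hr']]]] := run_step hr (erefl _).
  move: hq; rewrite /qstep /=.
  case/orP => [/eqP E|/andP [/eqP [E1] /eqP E2]].
    subst c'; have := run_count e0 hr'; rewrite /= hy -cats1 count_cat /= eqxx.
    lia.
  exists 1, cs'; rewrite cats0 /=.
  case: c' E1 E2 hr' => ? ? /= -> ->.
  by move=> h; split.
move=> hts; move: (hts); rewrite inE negb_or => /andP [ht hs] hy hr.

have [c' [cs' [-> [hq hr']]]] := run_step hr (erefl _).
move: hq; rewrite /qstep /=.
case/orP => [/eqP E|/andP [/eqP [E1 _] _]]; last by rewrite E1 eqxx in ht.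
subst c'; have [n [cs'' [hd hr'']]] := IH (rcons p t) cs' hs hy hr'.
exists n.+1, cs''; rewrite cat_rcons in hd hr''; by split.
Qed.

Lemma block_lemma (e : T) R y b : forall a zacc cs,
  e \notin a -> e \notin b -> count (pred1 e) y <= count (pred1 e) R ->
  run (a ++ e :: R ++ zacc, b ++ e :: y) cs ->
  exists zb, e \notin zb /\ exists n cs',
    drop n ((a ++ e :: R ++ zacc, b ++ e :: y) :: cs) = (R ++ zacc ++ zb, y) :: cs'
     /\ run (R ++ zacc ++ zb, y) cs'.
Proof.
elim: b => [|t b IH] a zacc cs /= ha hb hc hr.
  have [c' [cs' [-> [hq hr']]]] := run_step hr (erefl _).
  move: hq; rewrite /qstep /=.
  case/orP => [/eqP E|/andP [/eqP E1 /eqP E2]].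
    subst c'; have := run_count e hr'; rewrite /= -cats1 !count_cat /= eqxx.
    rewrite !count_cat /= => ?; exfalso; lia.
  clear hr; case: a ha E1 => [|a1 a] /=; last first.
    by rewrite inE negb_or => /andP [/negP hh _] [E1]; rewrite E1 eqxx in hh.
  move=> _ [E1]; exists [::]; split => //; exists 1, cs'; rewrite cats0 /=.
  by case: c' E1 E2 hr' => ? ? /= <- ->.
move: hb; rewrite inE negb_or => /andP [ht hb].
have [c' [cs' [-> [hq hr']]]] := run_step hr (erefl _).
move: hq; rewrite /qstep /=.
case/orP => [/eqP E|/andP [/eqP E1 /eqP E2]].
  subst c'; move: hr'; rewrite rcons_cat /= rcons_cat => hr'.
  have [zb [hz [n [cs'' [hd hr'']]]]] := IH a (rcons zacc t) cs' ha hb hc hr'.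
  exists (t :: zb); split; first by rewrite inE negb_or ht hz.
  exists n.+1, cs''; rewrite cat_rcons in hd hr''; by split.
clear hr; case: a ha E1 => [|a1 a] /=.
  by move=> _ [E1]; rewrite E1 eqxx in ht.
rewrite inE negb_or => /andP [_ ha] [E1 E3].
case: c' E3 E2 hr' => q1 q2 /= <- -> hr'.
have [zb [hz [n [cs'' [hd hr'']]]]] := IH a zacc cs' ha hb hc hr'.
exists zb; split => //; exists n.+1, cs''; by [].
Qed.

Lemma sep_cat_cons (e : T) s ss : sep_cat e (s :: ss) = s ++ e :: sep_cat e ss.
Proof. by rewrite /sep_cat /= -catA. Qed.

Lemma count_sep (a e : T) ss : all (fun s => a \notin s) ss ->
  count (pred1 a) (sep_cat e ss) = (a == e) * size ss.
Proof.
elim: ss => [|s ss IH]; first by rewrite muln0.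
move=> /= /andP [hs hss].
rewrite /sep_cat /= !count_cat -/(sep_cat e ss) IH // (elimT count_memPn hs) /=.
rewrite eq_sym; case: (a == e) => /=; lia.
Qed.

Lemma stage_step (e : T) u x v z i cs :
  i < size u -> size x = size u -> size z = i ->
  all (fun s => e \notin s) (v :: u ++ x) -> all (fun s => e \notin s) z ->
  run (stage_config e u x z v i) cs ->
  exists t, e \notin t /\ exists n cs',
    drop n (stage_config e u x z v i :: cs) = stage_config e u x (rcons z t) v i.+1 :: cs'
    /\ run (stage_config e u x (rcons z t) v i.+1) cs'.
Proof.
move=> hi hx hz /= /andP [hv]; rewrite all_cat => /andP [hu hxa] hza hr.
have hi' : i < size x by rewrite hx.
have hnu : e \notin nth [::] u i by apply: (allP hu); exact: mem_nth.
have hnx : e \notin nth [::] x i by apply: (allP hxa); exact: mem_nth.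
set R := sep_cat e (drop i.+1 u) ++ flatten z.
set y := sep_cat e (drop i.+1 x) ++ v.
have E : stage_config e u x z v i = (nth [::] u i ++ e :: R ++ [::], nth [::] x i ++ e :: y).
  rewrite /stage_config (drop_nth [::] hi) (drop_nth [::] hi') (take_oversize (n:=i)) ?hz // cats0.
  by rewrite /R /y /sep_cat /= -!catA.
have hc : count (pred1 e) y <= count (pred1 e) R.
  rewrite /y /R !count_cat !count_sep ?eqxx ?(elimT count_memPn hv) ?size_drop ?hx.
  - lia.
  - by apply/allP => s hs; apply: (allP hu); exact: mem_drop hs.
  - by apply/allP => s hs; apply: (allP hxa); exact: mem_drop hs.
rewrite E in hr *.
have [zb [hzb [n [cs' [hd hr']]]]] := block_lemma hnu hnx hc hr.
have E2 : stage_config e u x (rcons z zb) v i.+1 = (R ++ [::] ++ zb, y).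
  rewrite /stage_config take_oversize; last by rewrite size_rcons hz.
  by rewrite flatten_rcons /R catA.
exists zb; split => //; exists n, cs'; by rewrite E2.
Qed.

Lemma stage_rcons (e : T) u x v z t j : j <= size z ->
  stage_config e u x (rcons z t) v j = stage_config e u x z v j.
Proof. by move=> hj; rewrite /stage_config -cats1 takel_cat. Qed.

Lemma drop_nth_size (L : seq (config T)) n c cs :
  drop n L = c :: cs -> n < size L /\ nth ([::], [::]) L n = c.
Proof.
move=> hd; split.
  have := congr1 size hd; rewrite size_drop /=; lia.
by rewrite -[n]addn0 -nth_drop hd.
Qed.

End Q.

Theorem lemma2 (T : eqType) (e0 e : T) (k : nat) (u x : seq (seq T)) (v : seq T)
    (cs : seq (config T)) :
  e0 != e -> 0 < k -> size u = k -> size x = k ->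
  all (fun s => (e0 \notin s) && (e \notin s)) (v :: u ++ x) ->
  accepting_computation (the_word e0 e u x v) cs ->
  exists z : seq (seq T), size z = k /\
    exists js : seq nat, [/\ size js = k.+1, sorted leq js &
      forall i, i <= k ->
        nth 0 js i < size (comp_configs (the_word e0 e u x v) cs) /\
        nth ([::], [::]) (comp_configs (the_word e0 e u x v) cs) (nth 0 js i)
          = stage_config e u x z v i].
Proof.
move=> hne hk hu hx hall /andP [hp hl].
have hr : run ([::], the_word e0 e u x v) cs by rewrite /run hp hl.
move: (hall) => /= /andP [/andP [hv0 hv]]; rewrite all_cat => /andP [hua hxa].
have hall' : all (fun s => e \notin s) (v :: u ++ x).
  rewrite /= hv all_cat /=; apply/andP; split.
  - by apply/allP => s /(allP hua) /andP [].
  - by apply/allP => s /(allP hxa) /andP [].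
have hu0 : all (fun s => e0 \notin s) u by apply/allP => s /(allP hua) /andP [].
have hx0 : all (fun s => e0 \notin s) x by apply/allP => s /(allP hxa) /andP [].
have [n0 [cs0 [hd0 hr0]]] : exists n cs',
    drop n (comp_configs (the_word e0 e u x v) cs) = stage_config e u x [::] v 0 :: cs'
    /\ run (stage_config e u x [::] v 0) cs'.
  have [c' [cs' [Ecs [hq hr']]]] := run_step hr (erefl _).
  move: hq; rewrite /qstep /= => /orP [/eqP Ec|]; last by [].
  rewrite Ec in hr'.
  have hs : e0 \notin sep_cat e u.
    by apply/count_memPn; rewrite count_sep // (negbTE hne).
  have hy : count (pred1 e0) (sep_cat e x ++ v) = 0.
    by rewrite count_cat count_sep // (negbTE hne) (elimT count_memPn hv0).
  have [n [cs'' [hd hr'']]] := pre_lemma hs hy hr'.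
  exists n.+1, cs''; rewrite /comp_configs Ecs /stage_config /= !cats0.
  rewrite Ec !drop0; by split.
have main : forall i, i <= k -> exists z, size z = i /\ all (fun s => e \notin s) z /\
   exists js, [/\ size js = i.+1, (forall j, j < i -> nth 0 js j <= nth 0 js j.+1),
     (forall j, j <= i -> exists cs',
        drop (nth 0 js j) (comp_configs (the_word e0 e u x v) cs) = stage_config e u x z v j :: cs') &
     exists cs', drop (nth 0 js i) (comp_configs (the_word e0 e u x v) cs)
        = stage_config e u x z v i :: cs' /\ run (stage_config e u x z v i) cs'].
  elim => [|i IH] hi.
    exists [::]; split => //; split => //; exists [:: n0]; split => //.
      by case => //; exists cs0.
    by exists cs0.
  have [z [hz [hza [js [hjs hmono hst [csi [hdi hri]]]]]]] := IH (ltnW hi).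
  have hiu : i < size u by rewrite hu.
  have [t [ht [n [cs' [hd hr']]]]] :=
    stage_step hiu (etrans hx (esym hu)) hz hall' hza hri.
  have hnew : drop (nth 0 js i + n) (comp_configs (the_word e0 e u x v) cs)
      = stage_config e u x (rcons z t) v i.+1 :: cs'.
    by rewrite addnC -drop_drop hdi.
  exists (rcons z t); split; first by rewrite size_rcons hz.
  split; first by rewrite all_rcons ht hza.
  exists (rcons js (nth 0 js i + n)); split.
  - by rewrite size_rcons hjs.
  - move=> j hj; rewrite !nth_rcons hjs.
    rewrite ltnS leq_eqVlt in hj; case/orP: hj => [/eqP ->|hj'].
    + by rewrite ltnSn ltnn eqxx leq_addr.
    + by rewrite !ltnS (ltnW hj') hj' hmono.
  - move=> j hj; rewrite nth_rcons hjs.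
    rewrite leq_eqVlt in hj; case/orP: hj => [/eqP ->|hj'].
    + by rewrite ltnn eqxx; exists cs'.
    + rewrite hj' stage_rcons; first exact: hst.
      by rewrite hz -ltnS.
  - by exists cs'; rewrite nth_rcons hjs ltnn eqxx.
have [z [hz [_ [js [hjs hmono hst _]]]]] := main k (leqnn k).
exists z; split => //; exists js; split => //.
  apply/(sortedP 0) => j; rewrite hjs ltnS; exact: hmono.
move=> i hi; have [cs' hd] := hst i hi.
exact: drop_nth_size hd.
Qed.
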